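(* Let $3\le a<b$ be integers and regard $T(z,\alpha)=\frac{-\ln(1-z)}{\alpha a z^{a-1}+(1-\alpha)bz^{b-1}}$ as a function of $(z,\alpha)\in(0,1)\times\mathbb{R}$ (where the denominator is nonzero). Then $T$ has exactly one critical point, namely $$(\tilde z,\tilde\alpha)=\Big((a/b)^{1/(b-a)},\ \frac{b-1}{b-a}-\frac{1}{f(\tilde z)(b-a)}\Big),$$ and this point is a saddle point (the Hessian of $T$ there has negative determinant).
   Context: $f(z)=\frac{-\ln(1-z)(1-z)}{z}$ for $z\in(0,1)$. *)

(* Defs.v *)
From Stdlib Require Import Reals.
Open Scope R_scope.

Definition f (z : R) : R := - ln (1 - z) * (1 - z) / z.

Definition denom (a b : nat) (z alpha : R) : R :=
  alpha * INR a * z ^ (a - 1) + (1 - alpha) * INR b * z ^ (b - 1).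

Definition T (a b : nat) (z alpha : R) : R := - ln (1 - z) / denom a b z alpha.

Definition dom (a b : nat) (z alpha : R) : Prop :=
  0 < z < 1 /\ denom a b z alpha <> 0.

Definition critical_point (F : R -> R -> R) (x0 y0 : R) : Prop :=
  derivable_pt_lim (fun x => F x y0) x0 0 /\
  derivable_pt_lim (fun y => F x0 y) y0 0.

Definition is_hessian (F : R -> R -> R) (x0 y0 hxx hxy hyx hyy : R) : Prop :=
  exists (Fx Fy : R -> R -> R) (eps : R), 0 < eps /\
    (forall x y, Rabs (x - x0) < eps -> Rabs (y - y0) < eps ->
       derivable_pt_lim (fun t => F t y) x (Fx x y) /\
       derivable_pt_lim (fun s => F x s) y (Fy x y)) /\
    derivable_pt_lim (fun t => Fx t y0) x0 hxx /\
    derivable_pt_lim (fun s => Fx x0 s) y0 hxy /\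
    derivable_pt_lim (fun t => Fy t y0) x0 hyx /\
    derivable_pt_lim (fun s => Fy x0 s) y0 hyy.

Definition z_tilde (a b : nat) : R := Rpower (INR a / INR b) (1 / (INR b - INR a)).

Definition alpha_tilde (a b : nat) : R :=
  (INR b - 1) / (INR b - INR a) - 1 / (f (z_tilde a b) * (INR b - INR a)).

(* Main.v *)
Require Import Defs.
From Stdlib Require Import Reals.
Open Scope R_scope.
From Coquelicot Require Import Coquelicot.
From Stdlib Require Import Lra Lia.

Definition LL (z : R) : R := - ln (1 - z).
Definition Da (a b : nat) (z : R) : R := INR a * z ^ (a - 1) - INR b * z ^ (b - 1).
Definition Dz (a b : nat) (z y : R) : R :=
  y * INR a * (INR (a - 1) * z ^ Init.Nat.pred (a - 1)) +
  (1 - y) * INR b * (INR (b - 1) * z ^ Init.Nat.pred (b - 1)).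
Definition Fx (a b : nat) (z y : R) : R :=
  (/ (1 - z) * denom a b z y - LL z * Dz a b z y) / (denom a b z y * denom a b z y).
Definition Fy (a b : nat) (z y : R) : R :=
  - (LL z * Da a b z) / (denom a b z y * denom a b z y).

Lemma dTz a b x y : 0 < 1 - x -> denom a b x y <> 0 ->
  derivable_pt_lim (fun t => T a b t y) x (Fx a b x y).
Proof.
  intros H1 H2. apply is_derive_Reals. unfold T, Fx, Dz, LL. unfold denom in *.
  auto_derive.
  - split; [lra | split; auto].
  - replace (1 + - x) with (1 - x) by ring. field. split; auto; lra.
Qed.

Lemma dTa a b x y : 0 < 1 - x -> denom a b x y <> 0 ->
  derivable_pt_lim (fun s => T a b x s) y (Fy a b x y).
Proof.
  intros H1 H2. apply is_derive_Reals. unfold T, Fy, Da, LL. unfold denom in *.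
  auto_derive.
  - replace (1 + - y) with (1 - y) by ring. auto.
  - replace (1 + - y) with (1 - y) by ring. field. auto.
Qed.

Lemma LL_pos x : 0 < x < 1 -> 0 < LL x.
Proof.
  intros [H1 H2]. unfold LL.
  assert (ln (1 - x) < ln 1) by (apply ln_increasing; lra). rewrite ln_1 in H. lra.
Qed.

Lemma pow_pred x n : (1 <= n)%nat -> x ^ n = x * x ^ Init.Nat.pred n.
Proof. intros H. destruct n. lia. simpl. reflexivity. Qed.

Lemma INR_m1 n : (1 <= n)%nat -> INR (n - 1) = INR n - 1.
Proof. intros H. rewrite minus_INR by auto. simpl. ring. Qed.

Lemma pow_split x a b : (1 <= a)%nat -> (a <= b)%nat -> x ^ (b - 1) = x ^ (a - 1) * x ^ (b - a).
Proof. intros. rewrite <- pow_add. f_equal. lia. Qed.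

Lemma zt_bounds a b : (3 <= a)%nat -> (a < b)%nat -> 0 < z_tilde a b < 1.
Proof.
  intros ha hab. unfold z_tilde, Rpower.
  assert (Ha : 0 < INR a) by (apply lt_0_INR; lia).
  assert (Hab : INR a < INR b) by (apply lt_INR; lia).
  assert (ln (INR a / INR b) < 0).
  { rewrite <- ln_1. apply ln_increasing. apply Rdiv_lt_0_compat; lra.
    apply Rmult_lt_reg_r with (INR b). lra. unfold Rdiv. rewrite Rmult_assoc, Rinv_l; lra. }
  split. apply exp_pos. apply (Rlt_le_trans _ (exp 0)); [apply exp_increasing | rewrite exp_0; lra].
  assert (0 < 1 / (INR b - INR a)) by (apply Rdiv_lt_0_compat; lra). nra.
Qed.

Lemma zt_pow a b : (3 <= a)%nat -> (a < b)%nat -> z_tilde a b ^ (b - a) = INR a / INR b.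
Proof.
  intros ha hab. pose proof (zt_bounds a b ha hab).
  assert (Ha : 0 < INR a) by (apply lt_0_INR; lia).
  assert (Hab : INR a < INR b) by (apply lt_INR; lia).
  rewrite <- Rpower_pow by lra. unfold z_tilde. rewrite Rpower_mult.
  rewrite minus_INR by lia. replace (1 / (INR b - INR a) * (INR b - INR a)) with 1 by (field; lra).
  apply Rpower_1. apply Rdiv_lt_0_compat; lra.
Qed.

Lemma zt_unique a b x : (3 <= a)%nat -> (a < b)%nat -> 0 < x -> x ^ (b - a) = INR a / INR b -> x = z_tilde a b.
Proof.
  intros ha hab hx H.
  assert (Hab : INR a < INR b) by (apply lt_INR; lia).
  unfold z_tilde. rewrite <- H, <- Rpower_pow by lra. rewrite Rpower_mult.
  rewrite minus_INR by lia. replace ((INR b - INR a) * (1 / (INR b - INR a))) with 1 by (field; lra).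
  rewrite Rpower_1; auto.
Qed.

Lemma pred_pow x n : (1 <= n)%nat -> x <> 0 -> x ^ Init.Nat.pred n = x ^ n / x.
Proof. intros H Hx. rewrite (pow_pred x n H). field. auto. Qed.

Ltac simp_pow a b x ha hab hx hrel :=
  rewrite ?(pred_pow x (b - 1)) by (lia || lra);
  rewrite ?(pow_split x a b) by lia; rewrite ?hrel;
  rewrite ?(pow_pred x (a - 1)) by lia;
  rewrite ?(INR_m1 a), ?(INR_m1 b) by lia.

Lemma test a b x y : (3 <= a)%nat -> (a < b)%nat -> 0 < x < 1 -> x ^ (b - a) = INR a / INR b ->
  denom a b x y = INR a * x ^ (a - 1).
Proof.
  intros ha hab hx hrel. unfold denom.
  assert (INR b <> 0) by (apply not_0_INR; lia).
  simp_pow a b x ha hab hx hrel. field. auto.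
Qed.

Lemma haz_val a b x y : (3 <= a)%nat -> (a < b)%nat -> 0 < x < 1 -> x ^ (b - a) = INR a / INR b ->
  derivable_pt_lim (fun t => Fy a b t y) x (LL x * (INR b - INR a) / (x * (INR a * x ^ (a - 1)))).
Proof.
  intros ha hab hx hrel.
  assert (INR b <> 0) by (apply not_0_INR; lia).
  assert (INR a <> 0) by (apply not_0_INR; lia).
  assert (0 < x ^ Init.Nat.pred (a - 1)) by (apply pow_lt; lra).
  assert (Hd : denom a b x y <> 0).
  { rewrite test by auto. rewrite pow_pred by lia. apply Rmult_integral_contrapositive; split; auto.
    apply Rmult_integral_contrapositive; split; lra. }
  apply is_derive_Reals. unfold Fy, Da, LL. unfold denom in *.
  auto_derive.
  - split. lra. split; auto.
  - replace (1 + - x) with (1 - x) by ring. fold (LL x). 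
    simp_pow a b x ha hab hx hrel. field.
    assert (HP : x * x ^ Init.Nat.pred (a - 1) * INR a <> 0).
    { apply Rmult_integral_contrapositive; split; auto. apply Rmult_integral_contrapositive; split; lra. }
    repeat split; try (intro; lra); try assumption; try (intro Hc; apply HP; rewrite <- Hc; ring).
Qed.

Ltac prep a b x :=
  assert (INR b <> 0) by (apply not_0_INR; lia);
  assert (INR a <> 0) by (apply not_0_INR; lia);
  assert (INR a < INR b) by (apply lt_INR; lia);
  assert (0 < INR a) by (apply lt_0_INR; lia);
  assert (0 < x ^ Init.Nat.pred (a - 1)) by (apply pow_lt; lra);
  assert (HP : x * x ^ Init.Nat.pred (a - 1) * INR a <> 0) by
    (apply Rmult_integral_contrapositive; split; auto; apply Rmult_integral_contrapositive; split; lra).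

Ltac side HP := repeat split; try (intro; lra); try assumption; try (let Hc := fresh in intro Hc; apply HP; rewrite <- Hc; ring).

Lemma denom_ne a b x y : (3 <= a)%nat -> (a < b)%nat -> 0 < x < 1 -> x ^ (b - a) = INR a / INR b ->
  denom a b x y <> 0.
Proof.
  intros ha hab hx hrel. prep a b x. rewrite test by auto. rewrite pow_pred by lia.
  intro Hc; apply HP; rewrite <- Hc; ring.
Qed.

Lemma hza_val a b x y : (3 <= a)%nat -> (a < b)%nat -> 0 < x < 1 -> x ^ (b - a) = INR a / INR b ->
  derivable_pt_lim (fun s => Fx a b x s) y (LL x * (INR b - INR a) / (x * (INR a * x ^ (a - 1)))).
Proof.
  intros ha hab hx hrel. pose proof (denom_ne a b x y ha hab hx hrel) as Hd. prep a b x.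
  apply is_derive_Reals. unfold Fx, Dz. unfold denom in *.
  auto_derive.
  - replace (1 + - y) with (1 - y) by ring. auto.
  - replace (1 + - y) with (1 - y) by ring.
    simp_pow a b x ha hab hx hrel. field. side HP.
Qed.

Lemma haa_val a b x y : (3 <= a)%nat -> (a < b)%nat -> 0 < x < 1 -> x ^ (b - a) = INR a / INR b ->
  derivable_pt_lim (fun s => Fy a b x s) y 0.
Proof.
  intros ha hab hx hrel. pose proof (denom_ne a b x y ha hab hx hrel) as Hd. prep a b x.
  apply is_derive_Reals. unfold Fy, Da. unfold denom in *.
  auto_derive.
  - replace (1 + - y) with (1 - y) by ring. auto.
  - replace (1 + - y) with (1 - y) by ring.
    simp_pow a b x ha hab hx hrel. field. side HP.
Qed.

Lemma Fy_zero a b x y : (3 <= a)%nat -> (a < b)%nat -> 0 < x < 1 -> x ^ (b - a) = INR a / INR b ->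
  Fy a b x y = 0.
Proof.
  intros ha hab hx hrel. pose proof (denom_ne a b x y ha hab hx hrel) as Hd. prep a b x.
  unfold Fy, Da. simp_pow a b x ha hab hx hrel. field. unfold denom in Hd. simp_pow a b x ha hab hx hrel. side HP.
Qed.

Lemma Fx_zero a b x : (3 <= a)%nat -> (a < b)%nat -> 0 < x < 1 -> x ^ (b - a) = INR a / INR b ->
  Fx a b x ((INR b - 1) / (INR b - INR a) - 1 / (Defs.f x * (INR b - INR a))) = 0.
Proof.
  intros ha hab hx hrel. set (y := (INR b - 1) / (INR b - INR a) - 1 / (Defs.f x * (INR b - INR a))).
  pose proof (denom_ne a b x y ha hab hx hrel) as Hd. prep a b x.
  pose proof (LL_pos x hx).
  unfold Fx, Dz. unfold denom in *. subst y. unfold Defs.f. fold (LL x).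
  simp_pow a b x ha hab hx hrel. field. side HP.
  intro Hc. assert (Hz : (LL x * (1 - x) * (INR b - INR a)) * (x * x ^ Init.Nat.pred (a - 1) * INR a) = 0) by (rewrite <- Hc; ring).
  apply Rmult_integral in Hz. destruct Hz as [Hz|Hz]; [|exact (HP Hz)].
  assert (0 < LL x * (1 - x) * (INR b - INR a)) by (apply Rmult_lt_0_compat; [apply Rmult_lt_0_compat|]; lra). lra.
Qed.

Lemma uniq_z a b x y : (3 <= a)%nat -> (a < b)%nat -> 0 < x < 1 -> denom a b x y <> 0 ->
  Fy a b x y = 0 -> x ^ (b - a) = INR a / INR b.
Proof.
  intros ha hab hx Hd H.
  assert (INR b <> 0) by (apply not_0_INR; lia).
  assert (0 < x ^ (a - 1)) by (apply pow_lt; lra).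
  pose proof (LL_pos x hx).
  unfold Fy in H.
  assert (H' : LL x * Da a b x = 0).
  { replace (LL x * Da a b x) with (- (- (LL x * Da a b x) / (denom a b x y * denom a b x y)) * (denom a b x y * denom a b x y)) by (field; auto).
    rewrite H. ring. }
  apply Rmult_integral in H'. destruct H' as [H'|H']; [lra|].
  unfold Da in H'. rewrite (pow_split x a b) in H' by lia.
  apply Rmult_eq_reg_l with (INR b * x ^ (a - 1)); [|apply Rmult_integral_contrapositive; split; lra].
  field_simplify; [|auto]. lra.
Qed.

Lemma uniq_y a b x y : (3 <= a)%nat -> (a < b)%nat -> 0 < x < 1 -> x ^ (b - a) = INR a / INR b ->
  Fx a b x y = 0 -> y = (INR b - 1) / (INR b - INR a) - 1 / (Defs.f x * (INR b - INR a)).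
Proof.
  intros ha hab hx hrel H.
  pose proof (denom_ne a b x y ha hab hx hrel) as Hd. prep a b x.
  pose proof (LL_pos x hx).
  unfold Fx in H.
  assert (HE : / (1 - x) * denom a b x y - LL x * Dz a b x y = 0).
  { match goal with |- ?u = 0 => replace u with ((u / (denom a b x y * denom a b x y)) * (denom a b x y * denom a b x y)) by (field; repeat split; auto; intro; lra) end.
    rewrite H. ring. }
  unfold Dz, denom in HE.
  match type of HE with ?u = 0 =>
    assert (Hk : y - ((INR b - 1) / (INR b - INR a) - 1 / (Defs.f x * (INR b - INR a))) = u / (LL x * INR a * x ^ Init.Nat.pred (a - 1) * (INR b - INR a))) end.
  { unfold Defs.f. fold (LL x). simp_pow a b x ha hab hx hrel. field. repeat split; try (intro; lra). }
  rewrite HE in Hk. unfold Rdiv in Hk. rewrite Rmult_0_l in Hk. lra.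
Qed.

Lemma box a b yt : (3 <= a)%nat -> (a < b)%nat ->
  exists eps, 0 < eps /\ forall x y, Rabs (x - z_tilde a b) < eps -> Rabs (y - yt) < eps ->
    0 < 1 - x /\ 0 < x /\ denom a b x y <> 0.
Proof.
  intros ha hab. set (zt := z_tilde a b).
  pose proof (zt_bounds a b ha hab) as hx. pose proof (zt_pow a b ha hab) as hrel. fold zt in hx, hrel.
  assert (Ha : 0 < INR a) by (apply lt_0_INR; lia).
  assert (Hb : 0 < INR b) by (apply lt_0_INR; lia).
  set (c := INR a * zt ^ (a - 1)).
  assert (Hc : 0 < c) by (unfold c; apply Rmult_lt_0_compat; [lra | apply pow_lt; lra]).
  assert (Hg : denom a b zt yt = c) by (unfold c; apply test; auto).
  assert (Hcont : continuity_pt (fun t => denom a b t yt) zt).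
  { apply derivable_continuous_pt. exists (Derive (fun t => denom a b t yt) zt).
    apply is_derive_Reals, Derive_correct. unfold denom. auto_derive. auto. }
  destruct (Hcont (c / 2)) as [alp [Halp Hal]]; [lra|].
  exists (Rmin alp (Rmin (c / (4 * (INR a + INR b))) (Rmin (zt / 2) ((1 - zt) / 2)))).
  split.
  { repeat apply Rmin_pos; try lra. apply Rdiv_lt_0_compat; lra. }
  intros x y H1 H2.
  pose proof (Rmin_l alp (Rmin (c / (4 * (INR a + INR b))) (Rmin (zt / 2) ((1 - zt) / 2)))) as m1.
  pose proof (Rmin_r alp (Rmin (c / (4 * (INR a + INR b))) (Rmin (zt / 2) ((1 - zt) / 2)))) as m2.
  pose proof (Rmin_l (c / (4 * (INR a + INR b))) (Rmin (zt / 2) ((1 - zt) / 2))) as m3.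
  pose proof (Rmin_r (c / (4 * (INR a + INR b))) (Rmin (zt / 2) ((1 - zt) / 2))) as m4.
  pose proof (Rmin_l (zt / 2) ((1 - zt) / 2)) as m5.
  pose proof (Rmin_r (zt / 2) ((1 - zt) / 2)) as m6.
  set (e := Rmin alp (Rmin (c / (4 * (INR a + INR b))) (Rmin (zt / 2) ((1 - zt) / 2)))) in *.
  apply Rabs_def2 in H1. apply Rabs_def2 in H2.
  assert (hx' : 0 < x < 1) by lra.
  assert (Hgx : Rabs (denom a b x yt - c) < c / 2).
  { destruct (Req_dec x zt) as [Ex|Ex].
    - rewrite Ex, Hg. replace (c - c) with 0 by ring. rewrite Rabs_R0. lra.
    - assert (K : dist R_met (denom a b x yt) (denom a b zt yt) < c / 2).
      { apply (Hal x). split. split. exact I. auto. simpl. unfold R_dist. apply Rabs_def1; lra. }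
      simpl in K. unfold R_dist in K. rewrite Hg in K. exact K. }
  apply Rabs_def2 in Hgx.
  assert (HP : 0 <= x ^ (a - 1) < 1) by (apply pow_lt_1_compat; [lra | lia]).
  assert (HQ : 0 <= x ^ (b - 1) < 1) by (apply pow_lt_1_compat; [lra | lia]).
  assert (Hdec : denom a b x y = denom a b x yt + (y - yt) * (INR a * x ^ (a - 1) - INR b * x ^ (b - 1)))
    by (unfold denom; ring).
  assert (He : e * (4 * (INR a + INR b)) <= c).
  { assert (e <= c / (4 * (INR a + INR b))) by lra.
    apply Rmult_le_reg_r with (/ (4 * (INR a + INR b))). apply Rinv_0_lt_compat; lra.
    rewrite Rmult_assoc, Rinv_r by lra. lra. }
  set (w := INR a * x ^ (a - 1) - INR b * x ^ (b - 1)) in *.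
  assert (Hw : - INR b < w < INR a) by (unfold w; split; nra).
  assert (Hdw : (y - yt) * w > - (c / 4)) by nra.
  split; [lra | split; [lra|]]. rewrite Hdec. lra.
Qed.
Theorem lemma7 (a b : nat) (ha : (3 <= a)%nat) (hab : (a < b)%nat) :
  dom a b (z_tilde a b) (alpha_tilde a b) /\
  critical_point (T a b) (z_tilde a b) (alpha_tilde a b) /\
  (forall z alpha, dom a b z alpha -> critical_point (T a b) z alpha ->
     z = z_tilde a b /\ alpha = alpha_tilde a b) /\
  (exists hzz hza haz haa,
     is_hessian (T a b) (z_tilde a b) (alpha_tilde a b) hzz hza haz haa /\
     hzz * haa - hza * haz < 0).
Proof.
  pose proof (zt_bounds a b ha hab) as hx. pose proof (zt_pow a b ha hab) as hrel.
  assert (HFx : Fx a b (z_tilde a b) (alpha_tilde a b) = 0) by (unfold alpha_tilde; apply Fx_zero; auto).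
  assert (HFy : Fy a b (z_tilde a b) (alpha_tilde a b) = 0) by (apply Fy_zero; auto).
  pose proof (denom_ne a b (z_tilde a b) (alpha_tilde a b) ha hab hx hrel) as Hd.
  split; [|split; [|split]].
  - split; auto.
  - split.
    + rewrite <- HFx. apply dTz; auto; lra.
    + rewrite <- HFy. apply dTa; auto; lra.
  - intros z al [hz hdz] [c1 c2].
    assert (E1 : Fy a b z al = 0) by (apply (uniqueness_limite (fun s => T a b z s) al); [apply dTa; auto; lra | exact c2]).
    assert (E2 : Fx a b z al = 0) by (apply (uniqueness_limite (fun t => T a b t al) z); [apply dTz; auto; lra | exact c1]).
    pose proof (uniq_z a b z al ha hab hz hdz E1) as hr.
    pose proof (uniq_y a b z al ha hab hz hr E2) as hy.
    pose proof (zt_unique a b z ha hab (proj1 hz) hr) as hzz.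
    split; auto. rewrite hy. unfold alpha_tilde. rewrite <- hzz. reflexivity.
  - set (zt := z_tilde a b) in *. set (yt := alpha_tilde a b) in *.
    set (K := LL zt * (INR b - INR a) / (zt * (INR a * zt ^ (a - 1)))).
    assert (HK : 0 < K).
    { unfold K. pose proof (LL_pos zt hx).
      assert (INR a < INR b) by (apply lt_INR; lia).
      assert (0 < INR a) by (apply lt_0_INR; lia).
      assert (0 < zt ^ (a - 1)) by (apply pow_lt; lra).
      apply Rdiv_lt_0_compat. apply Rmult_lt_0_compat; lra.
      apply Rmult_lt_0_compat; [lra|]. apply Rmult_lt_0_compat; lra. }
    exists (Derive (fun t => Fx a b t yt) zt), K, K, 0.
    split; [| nra].
    destruct (box a b yt ha hab) as [eps [Heps Hbox]].
    exists (Fx a b), (Fy a b), eps. split; auto. split.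
    { intros x y H1 H2. destruct (Hbox x y H1 H2) as [h1 [h2 h3]]. split.
      apply dTz; auto. apply dTa; auto. }
    split; [| split; [| split]].
    + apply is_derive_Reals, Derive_correct. unfold Fx, Dz, LL. unfold denom in *.
      auto_derive. repeat split; auto; lra.
    + apply hza_val; auto.
    + apply haz_val; auto.
    + apply haa_val; auto.
Qed.
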